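(* For any skew-symmetric matrix $M$ with label set $\mathsf{N}$, the tensors $\sum_{I\subseteq\mathsf{N}}\operatorname{Pf}(M_I)\langle I|$ and $\sum_{I\subseteq\mathsf{N}}\operatorname{Pf}(M_{\bar I})|I\rangle$ are morphisms of $\mathscr{P}$. Consequently $\mathscr{P}$ is a dagger monoidal category (with the usual dagger of linear maps).
   Context: For $i\in\mathbb{N}$ let $V_i\cong\mathbb{C}^2$ with orthonormal basis $v_{i,0},v_{i,1}$, and for a finite ordered $\mathsf{N}\subset\mathbb{N}$ let $V_\mathsf{N}=\bigotimes_{i\in\mathsf{N}}V_i$. For $I\subseteq\mathsf{N}$, $|I\rangle=\bigotimes_{i\in\mathsf{N}}v_{i,\chi(i,I)}$ and $\langle I|=\bigotimes_{i\in\mathsf{N}}v^*_{i,\chi(i,I)}$, $\chi$ the indicator of $I$. For a skew-symmetric matrix $M$ with rows and columns labeled by $\mathsf{N}$ (same order), $M_I$ is the principal submatrix on labels $I$ and $M_{\bar I}$ the principal submatrix with labels $I$ deleted; $\operatorname{sPf}(M)=\sum_{I\subseteq\mathsf{N}}\operatorname{Pf}(M_I)|I\rangle$ and $\operatorname{sPf}^\vee(M)=\sum_{I\subseteq\mathsf{N}}\operatorname{Pf}(M_{\bar I})\langle I|$ (Pfaffian of the empty matrix $1$, of odd-size matrices $0$). $\mathscr{P}$ is the monoidal subcategory of $\mathrm{Vect}_\mathbb{C}$ with objects the $V_\mathsf{N}$ and morphisms generated under composition (tensor contraction) and tensor product by all $\operatorname{sPf}(M)$ and $\operatorname{sPf}^\vee(M)$.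 *)

(* Defs.v *)
From mathcomp Require Import all_boot all_algebra all_fingroup.
From mathcomp Require Import reals complex.
Set Implicit Arguments. Unset Strict Implicit. Unset Printing Implicit Defensive.
Import GRing.Theory Num.Theory.
Local Open Scope ring_scope.

(* A finite ordered label set N is represented by
   its size n: the k-th label of N (in the given order) is the position k : 'I_n.
   A subset I of N is a set of positions {set 'I_n}; the basis vector |I> of
   V_N = (C^2)^{(x) n} is indexed by I.  Objects of the category are the V_N,
   i.e. the numbers n; a linear map V_m -> V_n is given by its matrix
   coefficients  f I J = <J| f |I>. *)

Section Defs.
Variable C : numClosedFieldType.

Definition skewsym n (M : 'M[C]_n) : Prop := M^T = - M.

(* successor position (only used for even i < n with n even) *)
Definition nxt n (i : 'I_n) : 'I_n :=
  if insub i.+1 is Some j then j else i.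

Definition pfaffian n (A : 'M[C]_n) : C :=
  if odd n then 0 else
  (\sum_(s : 'S_n) (-1) ^+ s *
       \prod_(i : 'I_n | ~~ odd i) A (s i) (s (nxt i)))
    / ((2 ^ n./2 * (n./2)`!)%N)%:R.

Definition psub n (M : 'M[C]_n) (I : {set 'I_n}) : 'M[C]_#|I| :=
  \matrix_(i < #|I|, j < #|I|)
     M (@enum_val _ (mem I) i) (@enum_val _ (mem I) j).

Definition pmor (m n : nat) := {set 'I_m} -> {set 'I_n} -> C.

Definition idmor n : pmor n n := fun I J => (I == J)%:R.

Definition comp m n p (g : pmor n p) (f : pmor m n) : pmor m p :=
  fun I K => \sum_(J : {set 'I_n}) f I J * g J K.

Definition lpart m1 m2 (I : {set 'I_(m1 + m2)}) : {set 'I_m1} :=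
  [set i | lshift m2 i \in I].
Definition rpart m1 m2 (I : {set 'I_(m1 + m2)}) : {set 'I_m2} :=
  [set j | rshift m1 j \in I].

Definition tens m1 n1 m2 n2 (f : pmor m1 n1) (g : pmor m2 n2)
  : pmor (m1 + m2) (n1 + n2) :=
  fun I J => f (lpart I) (lpart J) * g (rpart I) (rpart J).

Definition sPf n (M : 'M[C]_n) : pmor 0 n :=
  fun _ I => pfaffian (psub M I).

Definition sPfv n (M : 'M[C]_n) : pmor n 0 :=
  fun I _ => pfaffian (psub M (~: I)).

Definition pf_effect n (M : 'M[C]_n) : pmor n 0 :=
  fun I _ => pfaffian (psub M I).
Definition pf_state n (M : 'M[C]_n) : pmor 0 n :=
  fun _ I => pfaffian (psub M (~: I)).

Definition pmor_dagger m n (f : pmor m n) : pmor n m :=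
  fun J I => (f I J)^*.

Inductive inP : forall m n, pmor m n -> Prop :=
  | inP_id n : inP (@idmor n)
  | inP_sPf n (M : 'M[C]_n) : skewsym M -> inP (@sPf n M)
  | inP_sPfv n (M : 'M[C]_n) : skewsym M -> inP (@sPfv n M)
  | inP_comp m n p (g : pmor n p) (f : pmor m n) :
      inP g -> inP f -> inP (@comp m n p g f)
  | inP_tens m1 n1 m2 n2 (f : pmor m1 n1) (g : pmor m2 n2) :
      inP f -> inP g -> inP (@tens m1 n1 m2 n2 f g).

End Defs.

(* Main.v *)
Require Import Defs.
From mathcomp Require Import all_boot all_algebra all_fingroup.
From mathcomp Require Import reals complex.
Import GRing.Theory Num.Theory.
Local Open Scope ring_scope.
Set Implicit Arguments. Unset Strict Implicit. Unset Printing Implicit Defensive.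
Definition join a b (A : {set 'I_a}) (B : {set 'I_b}) : {set 'I_(a + b)} :=
  [set i | match split i with inl j => j \in A | inr k => k \in B end].

Lemma lpart_join a b (A : {set 'I_a}) (B : {set 'I_b}) : lpart (join A B) = A.
Proof. by apply/setP => i; rewrite !inE (unsplitK (inl _ i)). Qed.

Lemma rpart_join a b (A : {set 'I_a}) (B : {set 'I_b}) : rpart (join A B) = B.
Proof. by apply/setP => i; rewrite !inE (unsplitK (inr _ i)). Qed.

Lemma join_parts a b (I : {set 'I_(a + b)}) : join (lpart I) (rpart I) = I.
Proof.
apply/setP => i; rewrite !inE; case: splitP => j eij; rewrite inE;
  by congr (_ \in I); apply: val_inj.
Qed.

Lemma eq_parts a b (I J : {set 'I_(a + b)}) :
  (I == J) = (lpart I == lpart J) && (rpart I == rpart J).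
Proof.
apply/eqP/andP => [->|[/eqP e1 /eqP e2]]; first by [].
by rewrite -(join_parts I) -(join_parts J) e1 e2.
Qed.

Lemma lpartC a b (I : {set 'I_(a + b)}) : lpart (~: I) = ~: lpart I.
Proof. by apply/setP => i; rewrite !inE. Qed.

Lemma rpartC a b (I : {set 'I_(a + b)}) : rpart (~: I) = ~: rpart I.
Proof. by apply/setP => i; rewrite !inE. Qed.

Lemma rpart0 n (I : {set 'I_(0 + n)}) : rpart I = I.
Proof. by apply/setP => i; rewrite !inE; congr (_ \in I); apply: val_inj. Qed.

Lemma set_I0 (A B : {set 'I_0}) : A = B.
Proof. by apply/setP => -[]. Qed.
Section Bits. Local Open Scope nat_scope.
Definition nm n (I : {set 'I_n}) (k : nat) : bool :=
  if @insub nat (fun k => k < n) 'I_n k is Some i then i \in I else false.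
Definition bits n (I : {set 'I_n}) : seq bool := mkseq (nm I) n.

Lemma size_bits n (I : {set 'I_n}) : size (bits I) = n.
Proof. exact: size_mkseq. Qed.

Lemma nm_out n (I : {set 'I_n}) k : n <= k -> nm I k = false.
Proof. by move=> hk; rewrite /nm insubN // -leqNgt. Qed.

Lemma nth_bits n (I : {set 'I_n}) k : nth false (bits I) k = nm I k.
Proof.
case: (ltnP k n) => hk; first by rewrite nth_mkseq.
by rewrite nth_default ?size_bits // nm_out.
Qed.

Lemma nm_ord n (I : {set 'I_n}) (i : 'I_n) : nm I i = (i \in I).
Proof. by rewrite /nm valK. Qed.

Lemma nmE n (I : {set 'I_n}) k (hk : k < n) : nm I k = (Ordinal hk \in I).
Proof. by rewrite -nm_ord. Qed.


Lemma bits_inj n : injective (@bits n).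
Proof.
move=> I J e; apply/setP => i; by rewrite -!nm_ord -!nth_bits e.
Qed.

Lemma eq_bits n (I J : {set 'I_n}) : (I == J) = (bits I == bits J).
Proof. by apply/eqP/eqP => [->|/bits_inj]. Qed.

Lemma bits_eqP n (I : {set 'I_n}) (s : seq bool) :
  size s = n -> (forall k, k < n -> nm I k = nth false s k) -> bits I = s.
Proof.
move=> hs h; apply: (@eq_from_nth _ false); rewrite ?size_bits ?hs // => k hk.
by rewrite nth_bits h.
Qed.

Lemma bits_lpart m1 m2 (I : {set 'I_(m1 + m2)}) :
  bits (lpart I) = take m1 (bits I).
Proof.
apply: bits_eqP; first by rewrite size_takel // size_bits leq_addr.
move=> k hk; rewrite nth_take // nth_bits (nmE _ hk) (nmE _ (ltn_addr m2 hk)) inE.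
by congr (_ \in I); apply: val_inj.
Qed.

Lemma bits_rpart m1 m2 (I : {set 'I_(m1 + m2)}) :
  bits (rpart I) = drop m1 (bits I).
Proof.
apply: bits_eqP; first by rewrite size_drop size_bits addKn.
move=> k hk; rewrite nth_drop nth_bits (nmE _ hk).
have hk' : m1 + k < m1 + m2 by rewrite ltn_add2l.
rewrite (nmE _ hk') inE; by congr (_ \in I); apply: val_inj.
Qed.

Lemma bits_compl n (I : {set 'I_n}) : bits (~: I) = map negb (bits I).
Proof.
apply: bits_eqP; first by rewrite size_map size_bits.
move=> k hk; rewrite (nth_map false) ?size_bits // nth_bits !(nmE _ hk) inE //.
Qed.

Fixpoint allbits n : seq (seq bool) :=
  if n is n'.+1 then map (cons false) (allbits n') ++ map (cons true) (allbits n')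
  else [:: [::]].

Lemma cons_inj (b : bool) : injective (cons b).
Proof. by move=> x y [] . Qed.

Lemma mem_allbits n y : (y \in allbits n) = (size y == n).
Proof.
elim: n y => [|n IH] [|b y] /=; rewrite ?inE //.
- rewrite mem_cat; apply/negbTE; apply/orP => -[] /mapP [z _] //.
- rewrite mem_cat eqSS -IH; case: b; rewrite (mem_map (@cons_inj _)).
  + have -> : (true :: y \in [seq false :: i | i <- allbits n]) = false.
      by apply/negbTE/mapP => -[z _].
    by [].
  + have -> : (false :: y \in [seq true :: i | i <- allbits n]) = false.
      by apply/negbTE/mapP => -[z _].
    by rewrite orbF.
Qed.

Lemma uniq_allbits n : uniq (allbits n).
Proof.
elim: n => [|n IH] //=.
rewrite cat_uniq !(map_inj_uniq (@cons_inj _)) IH /=.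
by rewrite andbT; apply/hasPn => z /mapP [y _ ->]; apply/mapP => -[w _ []].
Qed.

End Bits.
Lemma sum_sets (R : nmodType) n (F : seq bool -> R) :
  \sum_(J : {set 'I_n}) F (bits J) = \sum_(y <- allbits n) F y.
Proof.
rewrite -big_enum -(big_map (@bits n) xpredT).
apply: perm_big; apply: uniq_perm.
- rewrite map_inj_uniq ?enum_uniq //; exact: bits_inj.
- exact: uniq_allbits.
move=> y; rewrite mem_allbits; apply/mapP/eqP => [[J _ ->]|hy].
  by rewrite size_bits.
exists [set i : 'I_n | nth false y i]; first by rewrite mem_enum.
apply/esym/bits_eqP => // k hk; by rewrite (nmE _ hk) inE.
Qed.
Lemma card_bits n (I : {set 'I_n}) : #|I| = count id (bits I).
Proof.
rewrite /bits /mkseq count_map -val_enum_ord count_map cardE.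
rewrite enumT -size_filter /enum_mem; congr size; apply: eq_filter => i /=.
by rewrite nm_ord.
Qed.
Section Pf.
Variable C : numClosedFieldType.

Lemma pf_odd n (A : 'M[C]_n) : odd n -> pfaffian A = 0.
Proof. by rewrite /pfaffian => ->. Qed.

Lemma pf_size0 n (A : 'M[C]_n) : n = 0%N -> pfaffian A = 1.
Proof.
move=> e; subst n; rewrite /pfaffian /= divr1.
rewrite (bigD1 1%g) //= [X in _ + X]big1 ?addr0; last first.
  by move=> s /eqP hs; exfalso; apply: hs; apply/permP => -[].
by rewrite odd_perm1 expr0 mul1r big1 // => -[].
Qed.

Lemma ord2P (i0 i1 i : 'I_2) : val i0 = 0%N -> val i1 = 1%N -> i = i0 \/ i = i1.
Proof.
move=> h0 h1; case: i => [[|[|k]] hk] //.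
  by left; apply: val_inj; rewrite h0.
by right; apply: val_inj; rewrite h1.
Qed.

Lemma pf_size2 n (A : 'M[C]_n) (i0 i1 : 'I_n) :
  n = 2%N -> val i0 = 0%N -> val i1 = 1%N -> A^T = - A -> pfaffian A = A i0 i1.
Proof.
move=> e; subst n => h0 h1 sk.
have i01 : i0 != i1 by apply/eqP => e; move: h0; rewrite e h1.
have nx : nxt i0 = i1.
  rewrite /nxt h0; case: insubP => [j _ hj|]; first by apply: val_inj; rewrite hj h1.
  by move=> h; exfalso; move: h.
have term (s : 'S_2) : (-1) ^+ s * \prod_(i < 2 | ~~ odd i) A (s i) (s (nxt i)) = A i0 i1.
  rewrite (bigD1 i0) ?h0 //= big1 ?mulr1 ?nx; last first.
    move=> i /andP [hi hne]; case: (ord2P i h0 h1) => e; first by rewrite e eqxx in hne.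
    by move: hi; rewrite e h1.
  case: (ord2P (s i0) h0 h1) => e.
    have -> : s = 1%g.
      apply/permP => i; rewrite perm1; case: (ord2P i h0 h1) => ->; first by [].
      case: (ord2P (s i1) h0 h1) => // e'.
      by move/perm_inj: (etrans e (esym e')) => h; rewrite h eqxx in i01.
    by rewrite odd_perm1 expr0 mul1r !perm1.
  have -> : s = tperm i0 i1.
    apply/permP => i; case: (ord2P i h0 h1) => ->; first by rewrite tpermL.
    rewrite tpermR; case: (ord2P (s i1) h0 h1) => // e'.
    by move/perm_inj: (etrans e (esym e')) => h; rewrite h eqxx in i01.
  rewrite odd_tperm i01 expr1 tpermL tpermR mulN1r.
  have := congr1 (fun M : 'M[C]_2 => M i0 i1) sk; rewrite /= !mxE => ->.
  by rewrite opprK.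
rewrite /pfaffian /= (eq_bigr _ (fun s _ => term s)) sumr_const card_Sn /=.
have -> : (2 ^ 1 * 1`!)%N = 2`! by [].
by rewrite -[A i0 i1 *+ _]mulr_natr mulfK // pnatr_eq0.
Qed.
End Pf.
Lemma sorted_enum_set n (A : {set 'I_n}) : sorted ltn (map val (enum A)).
Proof.
rewrite -[enum _](eq_filter (mem_enum _)).
rewrite -(eq_filter (mem_map val_inj _)) -filter_map.
by rewrite (sorted_filter ltn_trans) // unlock val_ord_enum iota_ltn_sorted.
Qed.

Lemma enum_val_mono n (J : {set 'I_n}) (i j : 'I_#|J|) :
  (i < j)%N -> (val (enum_val i) < val (enum_val j))%N.
Proof.
move=> hij.
have x := enum_val i.
rewrite !(enum_val_nth x) -!(nth_map x (val x)) -?cardE //.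
apply: (sorted_ltn_nth ltn_trans) => //; first exact: sorted_enum_set.
all: by rewrite inE size_map -cardE.
Qed.
Section Pf2.
Variable C : numClosedFieldType.

Definition sgnmx n (s : int) : 'M[C]_n :=
  \matrix_(i, j) (if (i < j)%N then s%:~R else if (j < i)%N then - s%:~R else 0).

Lemma skew_sgnmx n s : skewsym (sgnmx n s).
Proof.
rewrite /skewsym; apply/matrixP => i j; rewrite !mxE.
by case: (ltngtP i j) => h //=; rewrite ?opprK ?oppr0.
Qed.

Lemma skew0 n : skewsym (0 : 'M[C]_n).
Proof. by rewrite /skewsym trmx0 oppr0. Qed.

Lemma skew_psub n (M : 'M[C]_n) (J : {set 'I_n}) : M^T = - M -> (psub M J)^T = - psub M J.
Proof.
move=> sk; apply/matrixP => i j; rewrite !mxE.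
have := congr1 (fun A : 'M[C]_n => A (enum_val i) (enum_val j)) sk.
by rewrite /= !mxE.
Qed.

Definition pfval (k : nat) (s : int) : int :=
  if k == 0%N then 1 else if k == 2%N then s else 0.

Lemma pf_sgn n s (J : {set 'I_n}) : (n <= 3)%N ->
  pfaffian (psub (sgnmx n s) J) = (pfval #|J| s)%:~R.
Proof.
move=> hn; have hJ : (#|J| <= 3)%N by rewrite (leq_trans (max_card _)) ?card_ord.
rewrite /pfval; case: eqP => [e0|n0]; first by rewrite pf_size0.
case: eqP => [e2|n2].
  have h0 : (0 < #|J|)%N by rewrite e2.
  have h1 : (1 < #|J|)%N by rewrite e2.
  rewrite (@pf_size2 _ _ _ (Ordinal h0) (Ordinal h1)) //; last by apply: skew_psub; apply: skew_sgnmx.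
  rewrite mxE mxE.
  by rewrite (@enum_val_mono _ _ (Ordinal h0) (Ordinal h1)).
rewrite pf_odd //.
by move: hJ n0 n2; case: #|J| => [|[|[|[|k]]]].
Qed.
End Pf2.
Section Pf3.
Variable C : numClosedFieldType.

Lemma pf_zero n (J : {set 'I_n}) : pfaffian (psub (0 : 'M[C]_n) J) = (J == set0)%:R.
Proof.
case: (eqVneq J set0) => [->|hJ].
  by rewrite pf_size0 // cards0.
have hc : (0 < #|J|)%N by rewrite card_gt0.
rewrite /=; case: (boolP (odd #|J|)) => ho; first by rewrite pf_odd.
rewrite /pfaffian (negbTE ho) big1 ?mul0r // => s _.
by rewrite (bigD1 (Ordinal hc)) //= !mxE mul0r mulr0.
Qed.

Lemma pf_conj n (A : 'M[C]_n) : pfaffian (map_mx Num.conj_op A) = (pfaffian A)^*.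
Proof.
rewrite /pfaffian; case: (odd n); first by rewrite rmorph0.
rewrite fmorph_div rmorph_nat rmorph_sum; congr (_ / _); apply: eq_bigr => s _.
rewrite rmorphM rmorph_prod rmorphXn rmorphN1; congr (_ * _).
by apply: eq_bigr => i _; rewrite mxE.
Qed.

Lemma psub_map n (f : C -> C) (M : 'M[C]_n) J : psub (map_mx f M) J = map_mx f (psub M J).
Proof. by apply/matrixP => i j; rewrite !mxE. Qed.

Lemma skew_conj n (M : 'M[C]_n) : skewsym M -> skewsym (map_mx Num.conj_op M).
Proof. by rewrite /skewsym => sk; rewrite map_trmx sk map_mxN. Qed.
End Pf3.
Section Rep.
Variable C : numClosedFieldType.

Definition rep m n (f : pmor C m n) (t : seq bool -> seq bool -> int) :=
  forall I J, f I J = (t (bits I) (bits J))%:~R.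

Definition sumZ (s : seq (seq bool)) (F : seq bool -> int) : int :=
  foldr (fun y acc => F y + acc) 0 s.
Definition compZ n (tg tf : seq bool -> seq bool -> int) : seq bool -> seq bool -> int :=
  fun x z => sumZ (allbits n) (fun y => tf x y * tg y z).
Definition tensZ m1 n1 (tf tg : seq bool -> seq bool -> int) : seq bool -> seq bool -> int :=
  fun x y => tf (take m1 x) (take n1 y) * tg (drop m1 x) (drop n1 y).
Definition idZ (x y : seq bool) : int := (x == y)%:Z.

Lemma sumZE (R : nmodType) s (F : seq bool -> R) :
  \sum_(y <- s) F y = foldr (fun y acc => F y + acc) 0 s.
Proof. by elim: s => [|y s IH]; rewrite ?big_nil ?big_cons ?IH. Qed.

Lemma rep_id n : rep (@idmor C n) idZ.
Proof. by move=> I J; rewrite /idmor /idZ eq_bits. Qed.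

Lemma rep_comp m n p (g : pmor C n p) (f : pmor C m n) tg tf :
  rep g tg -> rep f tf -> rep (Defs.comp g f) (compZ n tg tf).
Proof.
move=> hg hf I K; rewrite /Defs.comp.
under eq_bigr do rewrite hf hg -intrM.
rewrite (@sum_sets _ n (fun y => ((tf (bits I) y * tg y (bits K))%:~R : C))).
rewrite -rmorph_sum /compZ /sumZ sumZE //.
Qed.

Lemma rep_tens m1 n1 m2 n2 (f : pmor C m1 n1) (g : pmor C m2 n2) tf tg :
  rep f tf -> rep g tg -> rep (tens f g) (tensZ m1 n1 tf tg).
Proof.
move=> hf hg I J; rewrite /tens hf hg /tensZ -intrM.
by rewrite !bits_lpart !bits_rpart.
Qed.

Lemma rep_sPf3 s : rep (sPf (sgnmx C 3 s)) (fun _ y => pfval (count id y) s).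
Proof. by move=> I J; rewrite /sPf pf_sgn // card_bits. Qed.

Lemma rep_sPfv2 s : rep (sPfv (sgnmx C 2 s)) (fun x _ => pfval (count id (map negb x)) s).
Proof. by move=> I J; rewrite /sPfv pf_sgn // card_bits bits_compl. Qed.

Definition Xm n : pmor C n n := fun I J => (J == ~: I)%:R.

Lemma rep_X n : rep (@Xm n) (fun x y => (y == map negb x)%:Z).
Proof. by move=> I J; rewrite /Xm eq_bits bits_compl. Qed.
End Rep.
From Stdlib Require Import FunctionalExtensionality.
Section Gadget.
Variable C : numClosedFieldType.
Definition S3 : pmor C 0 3 := sPf (sgnmx C 3 (-1)).
Definition cap1 : pmor C 2 0 := sPfv (sgnmx C 2 1).
Definition cap0 : pmor C 2 0 := sPfv (sgnmx C 2 0).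
Definition Tg : pmor C 1 2 := Defs.comp (tens cap1 (@idmor C 2)) (tens (@idmor C 1) S3).
Definition Eg : pmor C 2 1 :=
  Defs.comp (tens cap0 (@idmor C 1))
    (Defs.comp (tens (@idmor C 1) (tens cap1 (@idmor C 2))) (tens (@idmor C 2) S3)).
Definition Xg : pmor C 2 2 := Defs.comp (tens (@idmor C 1) Eg) (tens Tg (@idmor C 1)).

Definition tS (x y : seq bool) : int := pfval (count id y) (-1).
Definition tc s (x y : seq bool) : int := pfval (count id (map negb x)) s.
Definition tT := compZ 4 (tensZ 2 0 (tc 1) idZ) (tensZ 1 1 idZ tS).
Definition tE1 := compZ 5 (tensZ 1 1 idZ (tensZ 2 0 (tc 1) idZ)) (tensZ 2 2 idZ tS).
Definition tE := compZ 3 (tensZ 2 0 (tc 0) idZ) tE1.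
Definition tXg := compZ 3 (tensZ 1 1 idZ tE) (tensZ 1 2 tT idZ).
Definition tX (x y : seq bool) : int := (y == map negb x)%:Z.

Lemma gadget_check : all (fun x => all (fun y => tX x y == tXg x y) (allbits 2)) (allbits 2).
Proof. vm_compute. reflexivity. Qed.

Ltac rstep :=
  match goal with
  | |- rep (Defs.comp ?g ?f) _ => refine (@rep_comp _ _ _ _ g f _ _ _ _)
  | |- rep (tens ?f ?g) _ => refine (@rep_tens _ _ _ _ _ f g _ _ _ _)
  | |- rep (@idmor _ ?n) _ => refine (@rep_id _ n)
  | |- rep (sPf _) _ => apply: rep_sPf3
  | |- rep (sPfv _) _ => apply: rep_sPfv2
  end.

Lemma rep_Xg : rep Xg tXg.
Proof.
rewrite /Xg /Eg /Tg /tXg /tE /tE1 /tT /S3 /cap0 /cap1.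
by repeat rstep.
Qed.

Lemma X2_eq : @Xm C 2 = Xg.
Proof.
apply: functional_extensionality => I; apply: functional_extensionality => J.
rewrite rep_Xg rep_X; congr intmul.
have := gadget_check; move/allP/(_ (bits I)); rewrite mem_allbits size_bits eqxx.
by move=> /(_ isT)/allP/(_ (bits J)); rewrite mem_allbits size_bits eqxx => /(_ isT)/eqP.
Qed.
End Gadget.
Section Main.
Variable C : numClosedFieldType.

Lemma inP_Xg : inP (Xg C).
Proof.
have s1 := skew_sgnmx C 2 1; have s0 := skew_sgnmx C 2 0; have s3 := skew_sgnmx C 3 (-1).
rewrite /Xg /Eg /Tg /S3 /cap0 /cap1.
repeat match goal with
  | |- inP (Defs.comp ?g ?f) => refine (@inP_comp _ _ _ _ g f _ _)
  | |- inP (tens ?f ?g) => refine (@inP_tens _ _ _ _ _ f g _ _)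
  | |- inP (@idmor _ ?n) => refine (@inP_id _ n)
  | |- inP (sPf _) => apply: inP_sPf; assumption
  | |- inP (sPfv _) => apply: inP_sPfv; assumption
  end.
Qed.

Lemma inP_X2 : inP (@Xm C 2).
Proof. rewrite X2_eq; exact: inP_Xg. Qed.

Lemma Xm_tens a b : tens (@Xm C a) (@Xm C b) = @Xm C (a + b).
Proof.
apply: functional_extensionality => I; apply: functional_extensionality => J.
by rewrite /tens /Xm -natrM mulnb (eq_parts J) lpartC rpartC.
Qed.

Lemma Xm0 : @Xm C 0 = @idmor C 0.
Proof.
apply: functional_extensionality => I; apply: functional_extensionality => J.
rewrite /Xm /idmor (set_I0 J I) eqxx; congr (_ %:R).
by rewrite -(set_I0 I (~: I)) eqxx.
Qed.

Lemma inP_Xdouble k : inP (@Xm C k.*2).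
Proof.
elim: k => [|k IH]; first by rewrite Xm0; apply: inP_id.
have := inP_tens inP_X2 IH; rewrite Xm_tens; exact.
Qed.

Lemma inP_Xnn n : inP (@Xm C (n + n)).
Proof. rewrite addnn; exact: inP_Xdouble. Qed.
End Main.
Section Main2.
Variable C : numClosedFieldType.

Lemma sum_unique (T : finType) (F : T -> C) a :
  (forall x, x != a -> F x = 0) -> \sum_x F x = F a.
Proof. by move=> h; rewrite (bigD1 a) //= big1 ?addr0 // => x /h. Qed.

Lemma setC_eq0 n (A : {set 'I_n}) : (~: A == set0) = (A == setT).
Proof. by rewrite -setCT (inj_eq (@setC_inj _)). Qed.

Lemma effect_eq n (M : 'M[C]_n) :
  pf_effect M = Defs.comp (tens (sPfv (0 : 'M[C]_n)) (sPfv M))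
                  (Defs.comp (@Xm C (n + n)) (tens (sPf (0 : 'M[C]_n)) (@idmor C n))).
Proof.
apply: functional_extensionality => I; apply: functional_extensionality => K0.
rewrite /pf_effect /Defs.comp.
have inner (L : {set 'I_(n + n)}) :
  \sum_(L' : {set 'I_(n + n)})
     tens (sPf (0 : 'M[C]_n)) (@idmor C n) I L' * @Xm C (n + n) L' L
  = (L == ~: join (set0 : {set 'I_n}) I)%:R.
  rewrite (@sum_unique _ _ (join set0 I)).
    by rewrite /tens lpart_join rpart_join /sPf pf_zero rpart0 /idmor !eqxx !mul1r.
  move=> L' hL'; rewrite /tens /sPf pf_zero rpart0 /idmor.
  case: eqP => [e1|]; last by rewrite !mul0r.
  case: eqP => [e2|]; last by rewrite mulr0 mul0r.
  by move: hL'; rewrite -(join_parts L') e1 e2 eqxx.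
under eq_bigr do rewrite inner.
rewrite (@sum_unique _ _ (~: join (set0 : {set 'I_n}) I)).
  by rewrite eqxx mul1r /tens /sPfv lpartC rpartC lpart_join rpart_join !setCK pf_zero eqxx mul1r.
by move=> L /negbTE ->; rewrite mul0r.
Qed.

Lemma state_eq n (M : 'M[C]_n) :
  pf_state M = Defs.comp (tens (sPfv (0 : 'M[C]_n)) (@idmor C n))
                  (Defs.comp (@Xm C (n + n)) (tens (sPf (0 : 'M[C]_n)) (sPf M))).
Proof.
apply: functional_extensionality => I0; apply: functional_extensionality => J.
rewrite /pf_state /Defs.comp.
have inner (L : {set 'I_(n + n)}) :
  \sum_(L' : {set 'I_(n + n)})
     tens (sPf (0 : 'M[C]_n)) (sPf M) I0 L' * @Xm C (n + n) L' L
  = (lpart (~: L) == set0)%:R * pfaffian (psub M (rpart (~: L))).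
  rewrite (@sum_unique _ _ (~: L)).
    by rewrite /tens /sPf /Xm setCK eqxx mulr1 pf_zero.
  move=> L' hL'; rewrite /Xm; have -> : (L == ~: L') = false.
    by apply/negbTE; apply: contra hL' => /eqP ->; rewrite setCK.
  by rewrite mulr0.
under eq_bigr do rewrite inner.
rewrite (@sum_unique _ _ (join setT J)).
  rewrite /tens /sPfv /idmor lpartC rpartC lpart_join rpart_join setCT eqxx mul1r.
  by rewrite (rpart0 (J : {set 'I_(0 + n)})) eqxx pf_zero eqxx !mulr1.
move=> L hL; rewrite /tens /sPfv /idmor lpartC rpartC (rpart0 (J : {set 'I_(0 + n)})) setC_eq0.
case: eqP => [e1|]; last by rewrite !mul0r.
case: eqP => [e2|]; last by rewrite !mulr0.
by move: hL; rewrite -(join_parts L) e1 e2 eqxx.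
Qed.
End Main2.
Section Main3.
Variable C : numClosedFieldType.

Ltac pstep :=
  match goal with
  | |- inP (Defs.comp ?g ?f) => refine (@inP_comp _ _ _ _ g f _ _)
  | |- inP (tens ?f ?g) => refine (@inP_tens _ _ _ _ _ f g _ _)
  | |- inP (@idmor _ ?n) => refine (@inP_id _ n)
  | |- inP (@Xm _ _) => apply: inP_Xnn
  | |- inP (sPf _) => apply: inP_sPf; assumption
  | |- inP (sPfv _) => apply: inP_sPfv; assumption
  end.

Lemma inP_effect n (M : 'M[C]_n) : skewsym M -> inP (pf_effect M).
Proof.
move=> sk; have s0 := skew0 C n; rewrite effect_eq.
by repeat pstep.
Qed.

Lemma inP_state n (M : 'M[C]_n) : skewsym M -> inP (pf_state M).
Proof.
move=> sk; have s0 := skew0 C n; rewrite state_eq.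
by repeat pstep.
Qed.

Lemma dagger_sPf n (M : 'M[C]_n) : pmor_dagger (sPf M) = pf_effect (map_mx Num.conj_op M).
Proof.
apply: functional_extensionality => I; apply: functional_extensionality => J.
by rewrite /pmor_dagger /sPf /pf_effect psub_map pf_conj.
Qed.

Lemma dagger_sPfv n (M : 'M[C]_n) : pmor_dagger (sPfv M) = pf_state (map_mx Num.conj_op M).
Proof.
apply: functional_extensionality => I; apply: functional_extensionality => J.
by rewrite /pmor_dagger /sPfv /pf_state psub_map pf_conj.
Qed.

Lemma dagger_id n : pmor_dagger (@idmor C n) = @idmor C n.
Proof.
apply: functional_extensionality => I; apply: functional_extensionality => J.
by rewrite /pmor_dagger /idmor rmorph_nat eq_sym.
Qed.

Lemma dagger_comp m n p (g : pmor C n p) (f : pmor C m n) :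
  pmor_dagger (Defs.comp g f) = Defs.comp (pmor_dagger f) (pmor_dagger g).
Proof.
apply: functional_extensionality => K; apply: functional_extensionality => I.
rewrite /pmor_dagger /Defs.comp rmorph_sum; apply: eq_bigr => J _.
by rewrite rmorphM mulrC.
Qed.

Lemma dagger_tens m1 n1 m2 n2 (f : pmor C m1 n1) (g : pmor C m2 n2) :
  pmor_dagger (tens f g) = tens (pmor_dagger f) (pmor_dagger g).
Proof.
apply: functional_extensionality => J; apply: functional_extensionality => I.
by rewrite /pmor_dagger /tens rmorphM.
Qed.

Lemma inP_dagger m n (f : pmor C m n) : inP f -> inP (pmor_dagger f).
Proof.
elim => {m n f}.
- by move=> n; rewrite dagger_id; apply: inP_id.
- by move=> n M sk; rewrite dagger_sPf; apply: inP_effect; apply: skew_conj.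
- by move=> n M sk; rewrite dagger_sPfv; apply: inP_state; apply: skew_conj.
- by move=> m n p g f _ hg _ hf; rewrite dagger_comp; apply: inP_comp.
- by move=> m1 n1 m2 n2 f g _ hf _ hg; rewrite dagger_tens; apply: inP_tens.
Qed.
End Main3.

Local Open Scope complex_scope.

Theorem mainTheorem11 (R : realType) :
  (forall n (M : 'M[complex R]_n), skewsym M -> inP (pf_effect M)) /\
  (forall n (M : 'M[complex R]_n), skewsym M -> inP (pf_state M)) /\
  (forall m n (f : pmor (complex R) m n), inP f -> inP (pmor_dagger f)).
Proof.
split; first exact: inP_effect.
split; first exact: inP_state.
exact: inP_dagger.
Qed.
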